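(* Let $\lambda>0$ and let $H_3=\mathbb{R}^3$ with coordinates $(x,y,z)$ carry the Lorentzian metric $g_2=\frac{1}{\lambda^2}dx^2+dy^2-(x\,dy+dz)^2$, with Levi-Civita connection $\nabla$. Let $e_1=\partial_y-x\partial_z$, $e_2=\lambda\partial_x$, $e_3=\partial_z$, and let $V_3=\lambda\partial_x-\lambda y\partial_z\,(=e_2-\lambda ye_3)$. Then every $V_3$-magnetic curve $\gamma(t)=(x(t),y(t),z(t))$, i.e. every smooth curve with $\nabla_{\gamma'}\gamma'=V_3\wedge\gamma'$, satisfies the system $y''-x'(z'+xy')=yx'+(z'+xy')$, $\frac{x''}{\lambda}+\lambda y'(z'+xy')=-\lambda yy'$, $(z'+xy')'=y'$.
   Context: $(e_1,e_2,e_3)$ is a $g_2$-orthonormal frame with $e_3$ timelike. For $X=\sum X^ie_i$, $Y=\sum Y^ie_i$ the vector product is defined in this frame by $X\wedge Y=(X^2Y^3-X^3Y^2)e_1+(X^3Y^1-X^1Y^3)e_2+(X^2Y^1-X^1Y^2)e_3$. Primes denote derivatives in $t$. *)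

(* Defs.v *)
From Stdlib Require Import Reals.
From Coquelicot Require Import Coquelicot.
Open Scope R_scope.

(* Vectors of R^3 (coordinates x,y,z = indices 0,1,2). *)
Definition vec := nat -> R.
Definition mk3 (a b c : R) : vec :=
  fun i => match i with 0%nat => a | 1%nat => b | _ => c end.
Definition sum3 (f : nat -> R) : R := f 0%nat + f 1%nat + f 2%nat.
Definition coord_basis (k : nat) : vec := fun i => if Nat.eqb i k then 1 else 0.

Definition g2 (lam : R) (p : vec) (u v : vec) : R :=
  / (lam ^ 2) * u 0%nat * v 0%nat + u 1%nat * v 1%nat
  - (p 0%nat * u 1%nat + u 2%nat) * (p 0%nat * v 1%nat + v 2%nat).

Definition gcomp (lam : R) (p : vec) (i j : nat) : R :=
  g2 lam p (coord_basis i) (coord_basis j).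

Definition dgcomp (lam : R) (a b c : nat) (p : vec) : R :=
  Derive (fun s => gcomp lam (fun m => p m + s * coord_basis a m) b c) 0.

(* Christoffel symbols of the first kind of the Levi-Civita connection:
   Gamma_{k i j} = 1/2 (d_i g_jk + d_j g_ik - d_k g_ij) = g(nabla_{d_i} d_j, d_k) *)
Definition christoffel1 (lam : R) (k i j : nat) (p : vec) : R :=
  / 2 * (dgcomp lam i j k p + dgcomp lam j i k p - dgcomp lam k i j p).

Definition frame (lam : R) (p : vec) (i : nat) : vec :=
  match i with
  | 0%nat => mk3 0 1 (- p 0%nat)
  | 1%nat => mk3 lam 0 0
  | _ => mk3 0 0 1
  end.
Definition eps (i : nat) : R := if Nat.eqb i 2 then -1 else 1.
(* components of X in the g2-orthonormal frame (e3 timelike) *)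
Definition fcoef (lam : R) (p : vec) (X : vec) (i : nat) : R :=
  eps i * g2 lam p X (frame lam p i).

(* vector product defined in the frame (paper's indices 1,2,3 = 0,1,2 here) *)
Definition wedge (lam : R) (p : vec) (X Y : vec) : vec :=
  let X1 := fcoef lam p X 0 in let X2 := fcoef lam p X 1 in let X3 := fcoef lam p X 2 in
  let Y1 := fcoef lam p Y 0 in let Y2 := fcoef lam p Y 1 in let Y3 := fcoef lam p Y 2 in
  fun m => (X2 * Y3 - X3 * Y2) * frame lam p 0 m
         + (X3 * Y1 - X1 * Y3) * frame lam p 1 m
         + (X2 * Y1 - X1 * Y2) * frame lam p 2 m.

Definition V3 (lam : R) (p : vec) : vec := mk3 lam 0 (- lam * p 1%nat).

Definition pos (x y z : R -> R) (t : R) : vec := mk3 (x t) (y t) (z t).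
Definition vel (x y z : R -> R) (t : R) : vec :=
  mk3 (Derive x t) (Derive y t) (Derive z t).
Definition acc (x y z : R -> R) (t : R) : vec :=
  mk3 (Derive_n x 2 t) (Derive_n y 2 t) (Derive_n z 2 t).

(* g(nabla_{gamma'} gamma', d_k) in coordinates:
   sum_l g_kl gamma''^l + sum_{i,j} Gamma_{kij} gamma'^i gamma'^j *)
Definition cov_acc_lowered (lam : R) (x y z : R -> R) (t : R) (k : nat) : R :=
  sum3 (fun l => gcomp lam (pos x y z t) k l * acc x y z t l)
  + sum3 (fun i => sum3 (fun j =>
       christoffel1 lam k i j (pos x y z t) * vel x y z t i * vel x y z t j)).

(* nabla_{gamma'} gamma' = V3 /\ gamma', tested against every coordinate
   vector d_k (equivalent, since g2 is nondegenerate) *)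
Definition magnetic_V3 (lam : R) (x y z : R -> R) : Prop :=
  forall (t : R) (k : nat), (k < 3)%nat ->
    cov_acc_lowered lam x y z t k
    = g2 lam (pos x y z t)
         (wedge lam (pos x y z t) (V3 lam (pos x y z t)) (vel x y z t))
         (coord_basis k).

Definition smooth_fun (f : R -> R) : Prop := forall (n : nat) (t : R), ex_derive_n f n t.

(* Main.v *)
Require Import Defs.
From Stdlib Require Import Reals Lra Psatz.
From Coquelicot Require Import Coquelicot.
Open Scope R_scope.

Lemma dg (lam : R) a b c p : dgcomp lam a b c p =
  - (coord_basis a 0%nat * coord_basis b 1%nat * (p 0%nat * coord_basis c 1%nat + coord_basis c 2%nat)
     + (p 0%nat * coord_basis b 1%nat + coord_basis b 2%nat) * (coord_basis a 0%nat * coord_basis c 1%nat)).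
Proof.
  unfold dgcomp, gcomp, g2. cbv beta.
  apply is_derive_unique. auto_derive; [exact I|ring].
Qed.

Lemma dw (x y z : R -> R) t :
  smooth_fun x -> smooth_fun y -> smooth_fun z ->
  Derive (fun s => Derive z s + x s * Derive y s) t =
  Derive_n z 2 t + Derive x t * Derive y t + x t * Derive_n y 2 t.
Proof.
  intros Hx Hy Hz.
  apply is_derive_unique.
  assert (Ez : ex_derive (Derive z) t) by exact (Hz 2%nat t).
  assert (Ey : ex_derive (Derive y) t) by exact (Hy 2%nat t).
  assert (Ex : ex_derive x t) by exact (Hx 1%nat t).
  assert (H : is_derive (fun s => Derive z s + x s * Derive y s) t
    (Derive (Derive z) t + (Derive x t * Derive y t + x t * Derive (Derive y) t))).
  { apply (is_derive_plus (Derive z) (fun s => x s * Derive y s)).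
    - apply Derive_correct; exact Ez.
    - apply (is_derive_mult x (Derive y)).
      + apply Derive_correct; exact Ex.
      + apply Derive_correct; exact Ey.
      + intros; apply Rmult_comm. }
  change (Derive_n z 2 t) with (Derive (Derive z) t).
  change (Derive_n y 2 t) with (Derive (Derive y) t).
  replace (Derive (Derive z) t + Derive x t * Derive y t + x t * Derive (Derive y) t)
    with (Derive (Derive z) t + (Derive x t * Derive y t + x t * Derive (Derive y) t)) by ring.
  exact H.
Qed.
Theorem mainTheorem7 (lam : R) (x y z : R -> R) :
  0 < lam ->
  smooth_fun x -> smooth_fun y -> smooth_fun z ->
  magnetic_V3 lam x y z ->
  forall t : R,
    let w := fun s => Derive z s + x s * Derive y s in
    Derive_n y 2 t - Derive x t * w t = y t * Derive x t + w t /\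
    Derive_n x 2 t / lam + lam * Derive y t * w t = - lam * y t * Derive y t /\
    Derive w t = Derive y t.
Proof.
  intros Hl Hx Hy Hz Hm t w.
  pose proof (Hm t 0%nat ltac:(lia)) as E0.
  pose proof (Hm t 1%nat ltac:(lia)) as E1.
  pose proof (Hm t 2%nat ltac:(lia)) as E2.
  unfold cov_acc_lowered, sum3, christoffel1 in E0, E1, E2.
  rewrite !dg in E0, E1, E2.
  cbv [Defs.pos gcomp g2 coord_basis acc pos vel mk3 wedge fcoef frame eps V3 Nat.eqb] in E0, E1, E2.
  unfold w; rewrite (dw x y z t Hx Hy Hz).
  set (x2 := Derive_n x 2 t) in *. set (y2 := Derive_n y 2 t) in *.
  set (z2 := Derive_n z 2 t) in *.
  set (x1 := Derive x t) in *. set (y1 := Derive y t) in *. set (z1 := Derive z t) in *.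
  set (x0 := x t) in *. set (y0 := y t) in *.
  assert (Hl0 : lam <> 0) by lra.
  match type of E0 with ?a = ?b => assert (K0 : a - b = 0) by lra; clear E0; set (D0 := a - b) in K0 end.
  match type of E1 with ?a = ?b => assert (K1 : a - b = 0) by lra; clear E1; set (D1 := a - b) in K1 end.
  match type of E2 with ?a = ?b => assert (K2 : a - b = 0) by lra; clear E2; set (D2 := a - b) in K2 end.
  split; [|split].
  - assert (K : y2 - x1 * (z1 + x0 * y1) - (y0 * x1 + (z1 + x0 * y1)) = D1 - x0 * D2)
      by (unfold D1, D2; field; auto).
    rewrite K1, K2 in K. lra.
  - assert (K : x2 / lam + lam * y1 * (z1 + x0 * y1) - (- lam * y0 * y1) = lam * D0)
      by (unfold D0; field; auto).
    rewrite K0 in K. lra.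
  - assert (K : z2 + x1 * y1 + x0 * y2 - y1 = - D2)
      by (unfold D2; field; auto).
    rewrite K2 in K. lra.
Qed.
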